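(* Let $k\ge2$ be an integer, $g(z)=z^3-z^2+7z+1$, and $\Gamma_k(t)=\Psi_k(g(t))$. Let $A=\{z\in\mathbb{C}:\Re z\le0,\ |g(z)|=1\}$ and $B=\{z\in\mathbb{C}:\Re z>0,\ |g(z)|=1\}$. Then $\Gamma_k$ has exactly $\varphi(k)$ roots in $A$ and exactly $2\varphi(k)$ roots in $B$.
   Context: $\Psi_k$ is the $k$-th cyclotomic polynomial and $\varphi$ is Euler's totient function. *)

(* Defs.v *)
From HB Require Import structures.
From mathcomp Require Import all_boot all_order all_algebra all_field.
Set Implicit Arguments. Unset Strict Implicit. Unset Printing Implicit Defensive.
Import Order.TTheory GRing.Theory Num.Theory.
Local Open Scope ring_scope.

(* ℂ is modelled by the algebraically closed field algC. *)
Definition gpoly : {poly algC} := 'X^3 - 'X^2 + 7%:R *: 'X + 1.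

(* Γ_k(t) = Ψ_k(g(t)), with Ψ_k the k-th cyclotomic polynomial 'Phi_k. *)
Definition Gamma (k : nat) : {poly algC} :=
  (map_poly intr 'Phi_k) \Po gpoly.

Definition setA : pred algC := fun z => ('Re z <= 0) && (`|gpoly.[z]| == 1).
Definition setB : pred algC := fun z => (0 < 'Re z) && (`|gpoly.[z]| == 1).

(* Main.v *)
Require Import Defs.
From HB Require Import structures.
From mathcomp Require Import all_boot all_order all_algebra all_field.
From mathcomp Require Import ring lra.
Import Order.TTheory GRing.Theory Num.Theory.
Local Open Scope ring_scope.

Section RealLemmas.
Variable R : realFieldType.

Lemma R_split (t hh : R) : 0 <= t -> 0 <= hh -> 7 <= hh + t + t^+2 -> t * hh <= 2 ->
  100 * t <= 31 \/ 2 <= t.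
Proof.
move=> h0 hh0 h7 h1.
have h2 : t * (7 - t - t^+2) <= 2 by nra.
have: (t - 2) * (t^+2 + 3*t - 1) >= 0 by nra.
case: (lerP 2 t) => h3; first by right.
move=> h4; left.
have h5 : t^+2 + 3*t - 1 <= 0 by nra.
nra.
Qed.

Lemma R_small (t x y : R) : 0 <= t -> 100 * t <= 31 -> t^+2 = x^+2 + y^+2 ->
  (x^+3 - 3*x*y^+2 - x^+2 + y^+2 + 7*x + 1)^+2 + (3*x^+2*y - y^+3 - 2*x*y + 7*y)^+2 = 1 -> x <= 0.
Proof.
move=> h0 ht hn h2.
have h1 : x^+2 + y^+2 <= 1/10 by rewrite -hn; nra.
case: (lerP x 0) => // hx.
have hP : 0 < x^+3 - 3*x*y^+2 - x^+2 + y^+2 + 7*x by nra.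
nra.
Qed.

Lemma R_big (t x1 y1 a b : R) : 0 <= t -> 100 * t <= 31 -> t^+2 = x1^+2 + y1^+2 ->
  a^+2 - b^+2 = -27 + 2*x1 - 3*x1^+2 + 3*y1^+2 -> 2*a*b = 2*y1 - 6*x1*y1 ->
  a < 1 - x1 /\ - a < 1 - x1.
Proof.
move=> h0 ht hn h2 h3.
have h1 : x1^+2 + y1^+2 <= 1/10 by rewrite -hn; nra.
have hb : 26 <= b^+2 by nra.
have hx1 : x1^+2 <= 1/10 by nra.
have hy1 : y1^+2 <= 1/10 by nra.
have hx2 : -1/3 <= x1 <= 1/3 by apply/andP; split; nra.
have hq : (1 - 3*x1)^+2 <= 4 by nra.
have hab' : (a*b)^+2 = y1^+2 * (1 - 3*x1)^+2.
  have -> : a * b = y1 * (1 - 3*x1) by nra.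
  by rewrite exprMn.
have hab : (a*b)^+2 <= 2/5 by rewrite hab'; nra.
have ha : a^+2 <= 1/50 by nra.
split; nra.
Qed.

Lemma R_two_small (ta tb td : R) : 0 <= ta -> 0 <= tb -> 0 <= td ->
  100 * ta <= 31 -> 100 * tb <= 31 -> td <= 1 + ta + tb -> 1 <= ta + tb + td ->
  100 * td <= 31 \/ 2 <= td -> False.
Proof. by move=> *; lra. Qed.

Lemma R_no_small (ta tb td : R) : 2 <= ta -> 2 <= tb -> 2 <= td -> ta * tb * td <= 2 -> False.
Proof. move=> h1 h2 h3 h4. have : 4 <= ta * tb by nra. nra. Qed.

End RealLemmas.

Lemma leR (x y : algR) : (x <= y) = (algRval x <= algRval y).
Proof. by []. Qed.
Lemma ltR (x y : algR) : (x < y) = (algRval x < algRval y).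
Proof. by []. Qed.
Lemma eqR (x y : algR) : algRval x = algRval y -> x = y.
Proof. exact: val_inj. Qed.

Ltac toC := rewrite ?leR ?ltR;
  rewrite ?(rmorphM, rmorphB, rmorphD, rmorphXn, rmorphN, rmorph1, rmorph0) ?rmorph_nat.

Lemma C_split (t hh : algC) (tR : t \is Creal) (hR : hh \is Creal) : 0 <= t -> 0 <= hh -> 7 <= hh + t + t^+2 -> t * hh <= 2 ->
  100 * t <= 31 \/ 2 <= t.
Proof.
move=> h1 h2 h3 h4.
have := @R_split _ (in_algR tR) (in_algR hR).
by toC; apply.
Qed.

Lemma C_small (t x y : algC) (tR : t \is Creal) (xR : x \is Creal) (yR : y \is Creal) :
  0 <= t -> 100 * t <= 31 -> t^+2 = x^+2 + y^+2 ->
  (x^+3 - 3*x*y^+2 - x^+2 + y^+2 + 7*x + 1)^+2 + (3*x^+2*y - y^+3 - 2*x*y + 7*y)^+2 = 1 -> x <= 0.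
Proof.
move=> h1 h2 h3 h4.
have := @R_small _ (in_algR tR) (in_algR xR) (in_algR yR).
toC => H; apply: H => //; apply: eqR; toC; done.
Qed.

Lemma C_big (t x1 y1 a b : algC) (tR : t \is Creal) (xR : x1 \is Creal) (yR : y1 \is Creal)
  (aR : a \is Creal) (bR : b \is Creal) : 0 <= t -> 100 * t <= 31 -> t^+2 = x1^+2 + y1^+2 ->
  a^+2 - b^+2 = -27 + 2*x1 - 3*x1^+2 + 3*y1^+2 -> 2*a*b = 2*y1 - 6*x1*y1 ->
  a < 1 - x1 /\ - a < 1 - x1.
Proof.
move=> h1 h2 h3 h4 h5.
have := @R_big _ (in_algR tR) (in_algR xR) (in_algR yR) (in_algR aR) (in_algR bR).
toC => H; apply: H => //; apply: eqR; toC; done.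
Qed.

Lemma C_two_small (ta tb td : algC) (aR : ta \is Creal) (bR : tb \is Creal) (dR : td \is Creal) :
  0 <= ta -> 0 <= tb -> 0 <= td ->
  100 * ta <= 31 -> 100 * tb <= 31 -> td <= 1 + ta + tb -> 1 <= ta + tb + td ->
  100 * td <= 31 \/ 2 <= td -> False.
Proof.
have := @R_two_small _ (in_algR aR) (in_algR bR) (in_algR dR).
by toC.
Qed.

Lemma C_no_small (ta tb td : algC) (aR : ta \is Creal) (bR : tb \is Creal) (dR : td \is Creal) :
  2 <= ta -> 2 <= tb -> 2 <= td -> ta * tb * td <= 2 -> False.
Proof.
have := @R_no_small _ (in_algR aR) (in_algR bR) (in_algR dR).
by toC.
Qed.

Lemma R_fin (R : realFieldType) (p x1 u w : R) : p < 1 - x1 -> - p < 1 - x1 ->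
  u + u = 1 - x1 + p -> w + w = 1 - x1 - p -> 0 < u /\ 0 < w.
Proof. move=> *; split; lra. Qed.

Lemma C_fin (p x1 u w : algC) (pR : p \is Creal) (xR : x1 \is Creal) (uR : u \is Creal) (wR : w \is Creal) :
  p < 1 - x1 -> - p < 1 - x1 ->
  u + u = 1 - x1 + p -> w + w = 1 - x1 - p -> 0 < u /\ 0 < w.
Proof.
move=> h1 h2 h3 h4.
have := @R_fin _ (in_algR pR) (in_algR xR) (in_algR uR) (in_algR wR).
by toC => H; apply: H => //; apply: eqR; toC.
Qed.

Definition G (x : algC) := x^+3 - x^+2 + 7 * x + 1.

Lemma hornerG x : gpoly.[x] = G x.
Proof. by rewrite /gpoly /G !hornerE. Qed.

Ltac realt := rewrite ?(rpredD, rpredB, rpredM, rpredX, rpredN, rpred_nat, rpred1, Creal_Re, Creal_Im, normr_real) //.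

Lemma rect_eq (p q r s : algC) : p \is Creal -> q \is Creal -> r \is Creal -> s \is Creal ->
  p + 'i * q = r + 'i * s -> p = r /\ q = s.
Proof.
move=> pR qR rR sR e; split.
  by rewrite -(Re_rect pR qR) e Re_rect.
by rewrite -(Im_rect pR qR) e Im_rect.
Qed.

Lemma rectG x y : G (x + 'i * y) =
  (x^+3 - 3*x*y^+2 - x^+2 + y^+2 + 7*x + 1) + 'i * (3*x^+2*y - y^+3 - 2*x*y + 7*y).
Proof.
have e : G (x + 'i * y) = (x^+3 - 3*x*y^+2 - x^+2 + y^+2 + 7*x + 1) + 'i * (3*x^+2*y - y^+3 - 2*x*y + 7*y)
   + ('i ^+ 2 + 1) * (3*x*y^+2 + 'i * y^+3 - y^+2) by rewrite /G; ring.
by rewrite e sqrCi addNr mul0r addr0.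
Qed.

Lemma split_root r : `|G r| = 1 -> 100 * `|r| <= 31 \/ 2 <= `|r|.
Proof.
move=> hG.
set h := r^+2 - r + 7.
have e : G r - 1 = r * h by rewrite /G /h; ring.
have h4 : `|r| * `|h| <= 2.
  rewrite -normrM -e; apply: le_trans (ler_normB _ _) _.
  by rewrite hG normr1.
have h3 : 7 <= `|h| + `|r| + `|r|^+2.
  have e7 : h + (r - r^+2) = 7 by rewrite /h; ring.
  have : `|h + (r - r^+2)| <= `|h| + (`|r| + `|r|^+2).
    apply: le_trans (ler_normD _ _) _; rewrite lerD2l -normrX.
    exact: ler_normB.
  by rewrite e7 normr_nat addrA.
apply: C_split (normr_real r) (normr_real h) _ _ h3 h4 => //.
Qed.

Lemma small_re r : `|G r| = 1 -> 100 * `|r| <= 31 -> 'Re r <= 0.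
Proof.
move=> hG hs.
have xR := Creal_Re r; have yR := Creal_Im r.
have hr : r = 'Re r + 'i * 'Im r := Crect r.
set x := 'Re r in xR hr *; set y := 'Im r in yR hr *.
have hGr := rectG x y; rewrite -hr in hGr.
have hn := normC2_Re_Im (G r).
rewrite hG expr1n hGr Re_rect ?Im_rect in hn; try by realt.
have hn2 := normC2_Re_Im r.
rewrite -/x -/y in hn2.
exact: (@C_small `|r| x y (normr_real r) xR yR (normr_ge0 r) hs hn2 (esym hn)).
Qed.

Lemma Re1 : 'Re 1 = 1 :> algC.
Proof. by apply/Creal_ReP; rewrite rpred1. Qed.

Lemma big_re (a b d : algC) : 100 * `|a| <= 31 -> a + b + d = 1 -> a * b + a * d + b * d = 7 ->
  0 < 'Re b /\ 0 < 'Re d.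
Proof.
move=> hs e1 e2.
have hv : (b - d)^+2 = -27 + 2 * a - 3 * a^+2.
  have e : (b - d)^+2 = -27 + 2 * a - 3 * a^+2 + (a + b + d - 1) * (2 + 2 * a + (a + b + d - 1))
     - 4 * (a * b + a * d + b * d - 7) by ring.
  by rewrite e e1 e2 !subrr mul0r mulr0 addr0 subr0.
have x1R := Creal_Re a; have y1R := Creal_Im a.
have pR := Creal_Re (b - d); have qR := Creal_Im (b - d).
have ha : a = 'Re a + 'i * 'Im a := Crect a.
have hw : b - d = 'Re (b - d) + 'i * 'Im (b - d) := Crect (b - d).
set x1 := 'Re a in x1R ha *; set y1 := 'Im a in y1R ha *.
set p := 'Re (b - d) in pR hw *; set q := 'Im (b - d) in qR hw *.
have e3 : (p^+2 - q^+2) + 'i * (2 * p * q) = (-27 + 2 * x1 - 3 * x1^+2 + 3 * y1^+2) + 'i * (2 * y1 - 6 * x1 * y1).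
  have l : (p + 'i * q)^+2 = (p^+2 - q^+2) + 'i * (2 * p * q) + ('i^+2 + 1) * q^+2 by ring.
  have r : -27 + 2 * (x1 + 'i * y1) - 3 * (x1 + 'i * y1)^+2 = (-27 + 2 * x1 - 3 * x1^+2 + 3 * y1^+2) + 'i * (2 * y1 - 6 * x1 * y1) + ('i^+2 + 1) * (- 3 * y1^+2) by ring.
  rewrite sqrCi addNr !mul0r !addr0 in l r.
  by rewrite -l -r -hw -ha.
have [e4 e5] : (p^+2 - q^+2) = (-27 + 2 * x1 - 3 * x1^+2 + 3 * y1^+2) /\ 2 * p * q = 2 * y1 - 6 * x1 * y1.
  by apply: rect_eq e3; realt.
have hn2 := normC2_Re_Im a.
rewrite -/x1 -/y1 in hn2.
have [h1 h2] := @C_big `|a| x1 y1 p q (normr_real a) x1R y1R pR qR (normr_ge0 a) hs hn2 e4 e5.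
have eb : b + b = (1 - a) + (b - d) + (a + b + d - 1) by ring.
have ed : d + d = (1 - a) - (b - d) + (a + b + d - 1) by ring.
rewrite e1 subrr addr0 in eb ed.
have eb' : 'Re b + 'Re b = 1 - x1 + p.
  by rewrite -raddfD eb raddfD raddfB /= Re1.
have ed' : 'Re d + 'Re d = 1 - x1 - p.
  by rewrite -raddfD ed ?addr0 raddfB raddfB /= Re1.
exact: (@C_fin p x1 ('Re b) ('Re d) pR x1R (Creal_Re b) (Creal_Re d) h1 h2 eb' ed').
Qed.

Lemma two_small (x y z : algC) : x + y + z = 1 -> 100 * `|x| <= 31 -> 100 * `|y| <= 31 ->
  100 * `|z| <= 31 \/ 2 <= `|z| -> False.
Proof.
move=> e hx hy hz.
have ez : z = 1 - x - y by rewrite -e; ring.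
have h1 : `|z| <= 1 + `|x| + `|y|.
  rewrite ez; apply: le_trans (ler_normB _ _) _; rewrite lerD2r.
  by apply: le_trans (ler_normB _ _) _; rewrite normr1.
have h2 : 1 <= `|x| + `|y| + `|z|.
  have : `|x + y + z| <= `|x| + `|y| + `|z|.
    apply: le_trans (ler_normD _ _) _; rewrite lerD2r; exact: ler_normD.
  by rewrite e normr1.
exact: (@C_two_small `|x| `|y| `|z| (normr_real _) (normr_real _) (normr_real _) (normr_ge0 _) (normr_ge0 _) (normr_ge0 _) hx hy h1 h2 hz).
Qed.

Lemma no_small (x y z c : algC) : `|c| = 1 -> x * y * z = c - 1 -> 2 <= `|x| -> 2 <= `|y| -> 2 <= `|z| -> False.
Proof.
move=> hc e hx hy hz.
have h : `|x| * `|y| * `|z| <= 2.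
  rewrite -!normrM e; apply: le_trans (ler_normB _ _) _; by rewrite hc normr1.
exact: (@C_no_small `|x| `|y| `|z| (normr_real _) (normr_real _) (normr_real _) hx hy hz h).
Qed.

Lemma classify (x y z c : algC) : `|c| = 1 -> G x = c -> G y = c -> G z = c ->
  100 * `|x| <= 31 -> x + y + z = 1 -> x * y + x * z + y * z = 7 ->
  [&& setA x, ~~ setB x, ~~ setA y, setB y, ~~ setA z & setB z].
Proof.
move=> hc hx hy hz hs e1 e2.
have [hb hd] := @big_re x y z hs e1 e2.
have ha : 'Re x <= 0 by apply: small_re => //; rewrite hx.
rewrite /setA /setB !hornerG hx hy hz hc eqxx ha hb hd !andbT /=.
by rewrite (le_gtF ha) (lt_geF hb) (lt_geF hd).
Qed.

Lemma gpoly_sub_size (c : algC) : size (gpoly - c%:P) = 4%N.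
Proof.
set q := - 'X^2 + (7%:R *: 'X + (1 - c)%:P).
have e : gpoly - c%:P = 'X^3 + q by rewrite /q /gpoly rmorphB /=; ring.
have sq : (size q <= 3)%N.
  rewrite /q; apply: leq_trans (size_add _ _) _; rewrite geq_max size_opp size_polyXn /=.
  apply: leq_trans (size_add _ _) _; rewrite geq_max; apply/andP; split.
    by apply: leq_trans (size_scale_leq _ _) _; rewrite size_polyX.
  by apply: leq_trans (size_polyC_leq1 _) _.
by rewrite e size_addl size_polyXn.
Qed.

Lemma key (c : algC) (rs : seq algC) : `|c| = 1 -> c != 1 ->
  gpoly - c%:P = \prod_(r <- rs) ('X - r%:P) ->
  count setA rs = 1%N /\ count setB rs = 2%N.
Proof.
move=> hc hc1 hp.
have hsz : size rs = 3%N.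
  by have := gpoly_sub_size c; rewrite hp size_prod_XsubC => -[].
have ev : forall x, G x - c = \prod_(r <- rs) (x - r).
  move=> x; rewrite -hornerG.
  have -> : gpoly.[x] - c = (gpoly - c%:P).[x] by rewrite hornerD hornerN hornerC.
  rewrite hp horner_prod; apply: eq_bigr => r _; by rewrite hornerXsubC.
case: rs hp hsz ev => [|a [|b [|d [|? ?]]]] //= hp _ ev.
have ev' : forall x, G x - c = (x - a) * (x - b) * (x - d).
  by move=> x; rewrite ev !big_cons big_nil mulr1 mulrA.
have root : forall x, x \in [:: a; b; d] -> G x = c.
  move=> x; rewrite !inE => /or3P [] /eqP ->; apply/eqP; rewrite -subr_eq0 ev';
  by rewrite subrr !(mulr0, mul0r).
have Ga := root a; have Gb := root b; have Gd := root d.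
rewrite !inE !eqxx ?orbT in Ga Gb Gd.
have {}Ga := Ga isT; have {}Gb := Gb isT; have {}Gd := Gd isT.
have E0 := ev' 0; have E1 := ev' 1; have Em := ev' (-1).
have two0 : (2 : algC) != 0 by rewrite pnatr_eq0.
have e1 : a + b + d = 1.
  have h : 2 * (a + b + d - 1) = ((G 1 - c) - (1 - a) * (1 - b) * (1 - d)) + ((G (-1) - c) - (-1 - a) * (-1 - b) * (-1 - d)) - 2 * ((G 0 - c) - (0 - a) * (0 - b) * (0 - d)) by rewrite /G; ring.
  move: h; rewrite E0 E1 Em !subrr mulr0 !addr0 subr0 => /eqP.
  by rewrite mulf_eq0 (negbTE two0) /= subr_eq0 => /eqP.
have e2 : a * b + a * d + b * d = 7.
  have h : 2 * (a * b + a * d + b * d - 7) = ((G (-1) - c) - (-1 - a) * (-1 - b) * (-1 - d)) - ((G 1 - c) - (1 - a) * (1 - b) * (1 - d)) by rewrite /G; ring.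
  move: h; rewrite E1 Em !subrr => /eqP.
  by rewrite mulf_eq0 (negbTE two0) /= subr_eq0 => /eqP.
have e3 : a * b * d = c - 1.
  have h : a * b * d - (c - 1) = (G 0 - c) - (0 - a) * (0 - b) * (0 - d) by rewrite /G; ring.
  by move: h; rewrite E0 subrr => /eqP; rewrite subr_eq0 => /eqP.
have nc : forall x, G x = c -> `|G x| = 1 by move=> x ->.
have Sa := @split_root a (nc _ Ga); have Sb := @split_root b (nc _ Gb); have Sd := @split_root d (nc _ Gd).
case: Sa => [sa|ba]; case: Sb => [sb|bb].
- by case: (@two_small a b d e1 sa sb Sd).
- case: Sd => [sd|bd].
    by case: (@two_small a d b _ sa sd (or_intror bb)); rewrite -e1; ring.
  have /andP[-> /andP[/negbTE -> /andP[/negbTE -> /andP[-> /andP[/negbTE -> ->]]]]] := @classify a b d c hc Ga Gb Gd sa e1 e2.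
  by [].
- case: Sd => [sd|bd].
    by case: (@two_small b d a _ sb sd (or_intror ba)); rewrite -e1; ring.
  have e1' : b + a + d = 1 by rewrite -e1; ring.
  have e2' : b * a + b * d + a * d = 7 by rewrite -e2; ring.
  have /andP[-> /andP[/negbTE -> /andP[/negbTE -> /andP[-> /andP[/negbTE -> ->]]]]] := @classify b a d c hc Gb Ga Gd sb e1' e2'.
  by [].
- case: Sd => [sd|bd].
    have e1' : d + a + b = 1 by rewrite -e1; ring.
    have e2' : d * a + d * b + a * b = 7 by rewrite -e2; ring.
    have /andP[-> /andP[/negbTE -> /andP[/negbTE -> /andP[-> /andP[/negbTE -> ->]]]]] := @classify d a b c hc Gd Ga Gb sd e1' e2'.
    by [].
  by case: (@no_small a b d c hc e3 ba bb bd).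
Qed.

Lemma gpoly_sub_lead (c : algC) : lead_coef (gpoly - c%:P) = 1.
Proof.
set q := - 'X^2 + (7%:R *: 'X + (1 - c)%:P).
have e : gpoly - c%:P = 'X^3 + q by rewrite /q /gpoly rmorphB /=; ring.
have sq : (size q <= 3)%N.
  rewrite /q; apply: leq_trans (size_add _ _) _; rewrite geq_max size_opp size_polyXn /=.
  apply: leq_trans (size_add _ _) _; rewrite geq_max; apply/andP; split.
    by apply: leq_trans (size_scale_leq _ _) _; rewrite size_polyX.
  by apply: leq_trans (size_polyC_leq1 _) _.
by rewrite e lead_coefDl ?size_polyXn ?lead_coefXn.
Qed.

Lemma build (I : eqType) (s : seq I) (w : I -> algC) :
  (forall i, i \in s -> `|w i| = 1 /\ w i != 1) ->
  exists rs : seq algC, \prod_(i <- s) (gpoly - (w i)%:P) = \prod_(r <- rs) ('X - r%:P) /\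
    count setA rs = size s /\ count setB rs = (2 * size s)%N.
Proof.
elim: s => [|i s IH] H.
  by exists [::]; rewrite !big_nil.
have [|rs [e1 [e2 e3]]] := IH.
  by move=> j js; apply: H; rewrite inE js orbT.
have [n1 n2] := H i (mem_head _ _).
have [ri ei] := closed_field_poly_normal (gpoly - (w i)%:P).
rewrite gpoly_sub_lead scale1r in ei.
have [c1 c2] := @key (w i) ri n1 n2 ei.
exists (ri ++ rs); rewrite big_cons big_cat /= e1 -ei; split => //.
by rewrite !count_cat c1 c2 e2 e3 mulnS.
Qed.

Theorem proposition3p8 (k : nat) (hk : (2 <= k)%N) :
  exists rs : seq algC,
    Gamma k = \prod_(r <- rs) ('X - r%:P) /\
    count setA rs = totient k /\
    count setB rs = (2 * totient k)%N.
Proof.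
have k0 : (0 < k)%N by apply: leq_trans hk.
have [z pz] := C_prim_root_exists k0.
set s := [seq i <- index_enum 'I_k | coprime (nat_of_ord i) k].
have hcyc : cyclotomic z k = \prod_(i <- s) ('X - (z ^+ i)%:P) by rewrite /cyclotomic big_filter.
have hs : size s = totient k.
  have := size_cyclotomic z k; rewrite hcyc size_prod_XsubC; by case.
have hG : Gamma k = \prod_(i <- s) (gpoly - (z ^+ i)%:P).
  rewrite /Gamma (Cintr_Cyclotomic pz) hcyc rmorph_prod; apply: eq_bigr => i _.
  by rewrite /= comp_polyB comp_polyX comp_polyC.
have [|rs [e1 [e2 e3]]] := @build _ s (fun i : 'I_k => z ^+ i).
  move=> i; rewrite mem_filter => /andP [ci _].
  have pw : k.-primitive_root (z ^+ i) by rewrite prim_root_exp_coprime.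
  split.
    apply/eqP; rewrite -(pexpr_eq1 k0 (normr_ge0 _)) -normrX (prim_expr_order pw).
    by rewrite normr1.
  apply/eqP => w1; have := prim_order_dvd pw 1; rewrite expr1 w1 eqxx dvdn1 => /eqP k1.
  by rewrite k1 in hk.
by exists rs; rewrite hG e1 e2 e3 hs.
Qed.
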